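(* For every $v\in\mathbb{C}^n$, the element $g=(\mathrm{J}(1,n),v)\in\mathrm{Aff}(n,\mathbb{C})$ is strongly $c$-reversible.
   Context: $\mathrm{J}(1,n)$ denotes the $n\times n$ Jordan block with $1$ on the diagonal and on the superdiagonal and $0$ elsewhere. $\mathrm{Aff}(n,\mathbb{C})$ is the group of affine maps $z\mapsto Az+v$, written $(A,v)$, with product $(A,v)(B,w)=(AB,Aw+v)$ and identity $e=(I_n,0)$. For $g=(A,v)$ set $\overline{g}=(\overline{A},\overline{v})$. An element $h$ is a coninvolution if $h\overline{h}=e$; $g$ is strongly $c$-reversible if there is a coninvolution $h$ with $hgh^{-1}=\overline{g}^{-1}$. *)

(* Defs.v *)
From HB Require Import structures.
From mathcomp Require Import all_boot all_order all_algebra.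
From mathcomp Require Import complex.
From mathcomp Require Import reals.
Set Implicit Arguments. Unset Strict Implicit. Unset Printing Implicit Defensive.
Import Order.TTheory GRing.Theory Num.Theory.
Local Open Scope ring_scope.
Local Open Scope complex_scope.

Definition jordan1 (F : nzRingType) (n : nat) : 'M[F]_n :=
  \matrix_(i < n, j < n) (((i : nat) == j) || ((j : nat) == i.+1))%:R.

(* Elements of Aff(n, C) represented as pairs (A, v) : z |-> A z + v;
   membership in Aff requires A invertible. *)
Definition aff (F : comUnitRingType) (n : nat) := ('M[F]_n * 'cV[F]_n)%type.

Definition aff_in (F : comUnitRingType) n (g : aff F n) : Prop := g.1 \in unitmx.

Definition aff_mul (F : comUnitRingType) n (g h : aff F n) : aff F n :=
  (g.1 *m h.1, g.1 *m h.2 + g.2).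

Definition aff_one (F : comUnitRingType) n : aff F n := (1%:M, 0).

Definition aff_inv (F : comUnitRingType) n (g : aff F n) : aff F n :=
  (invmx g.1, - (invmx g.1 *m g.2)).

Definition aff_conj (R : rcfType) n (g : aff R[i] n) : aff R[i] n :=
  (map_mx (fun z => z^*) g.1, map_mx (fun z => z^*) g.2).

Definition coninvolution (R : rcfType) n (h : aff R[i] n) : Prop :=
  aff_in h /\ aff_mul h (aff_conj h) = aff_one R[i] n.

Definition strongly_c_reversible (R : rcfType) n (g : aff R[i] n) : Prop :=
  exists h : aff R[i] n, coninvolution h /\
    aff_mul (aff_mul h g) (aff_inv h) = aff_inv (aff_conj g).

(* Main.v *)
Require Import Defs.
From HB Require Import structures.
From mathcomp Require Import all_boot all_order all_algebra.
From mathcomp Require Import complex.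
From mathcomp Require Import reals.
From mathcomp Require Import ring.
Local Open Scope ring_scope.
Import GRing.Theory.

Lemma sumD (F : comNzRingType) n (f : nat -> F) m :
  \sum_(k < n) ((k == m :> nat)%:R * f k) = if (m < n)%N then f m else 0.
Proof.
elim: n => [|n IH]; first by rewrite big_ord0.
rewrite big_ord_recr /= IH.
case: (ltngtP m n) => h.
- by rewrite (ltn_trans h (ltnSn n)) mul0r addr0.
- by rewrite ltnNge h mul0r addr0.
- by rewrite h ltnSn mul1r add0r.
Qed.

Lemma sumD' (F : comNzRingType) n (f : nat -> F) j :
  \sum_(k < n) ((j == k.+1 :> nat)%:R * f k) =
  if j is j'.+1 then (if (j' < n)%N then f j' else 0) else 0.
Proof.
case: j => [|j]; first by rewrite big1 // => k _; rewrite mul0r.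
rewrite -sumD; apply: eq_bigr => k _; by rewrite eqSS eq_sym.
Qed.

Lemma orb_nat (F : nzRingType) (a b : bool) : ~~ (a && b) -> ((a || b)%:R : F) = a%:R + b%:R.
Proof. by case: a; case: b => //= _; rewrite ?addr0 ?add0r. Qed.

Section Bin.
Variable F : comNzRingType.

Lemma core j : forall m i, (j < m)%N ->
  \sum_(k < m) (-1)^+k * ('C(j,k) * 'C(k,i))%:R = (-1)^+i * (i == j)%:R :> F.
Proof.
elim: j => [|j IH] [|m] i //= hm.
  rewrite big_ord_recl /= expr0 mul1r bin0 mul1n big1; last first.
    by move=> k _; rewrite /bump /= add1n bin0n /= mul0n mulr0.
  by case: i => [|i] //=; rewrite ?bin0 ?expr0 ?mulr1 ?addr0 ?mul0r ?mulr0 ?addr0 //.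
have hj : (j < m)%N by [].
rewrite big_ord_recl /= expr0 mul1r bin0 mul1n.
under eq_bigr => k _ do rewrite /bump /= add1n binS mulnDl natrD mulrDr.
rewrite big_split /=.
have E1 := IH m.+1 i (leqW hj).
rewrite big_ord_recl /= expr0 mul1r bin0 mul1n in E1.
have -> : \sum_(i0 < m) (-1) ^+ i0.+1 * ('C(j, i0.+1) * 'C(i0.+1, i))%:R =
   (-1)^+i * (i == j)%:R - 'C(0,i)%:R :> F.
  by rewrite -E1 /bump; under [in RHS]eq_bigr => k _ do rewrite /= add1n; rewrite addrC addKr.
rewrite addrA (addrC _ (_ - _)) addrNK.
clear E1; case: i => [|i].
  under eq_bigr => k _ do rewrite bin0 muln1 exprS mulN1r mulNr.
  rewrite sumrN.
  have := IH m 0 hj; under eq_bigr => k _ do rewrite bin0 muln1.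
  by move=> ->; rewrite /= expr0 !mul1r subrr.
under eq_bigr => k _ do rewrite binS mulnDr natrD mulrDr exprS mulN1r !mulNr.
rewrite big_split /= sumrN !IH // eqSS exprS.
by rewrite addNKr sumrN IH // !mulN1r mulNr.
Qed.
End Bin.

Section Mat.
Variable R : realType.
Local Notation C := (R[i]).
Variable n : nat.

Definition aa (i j : nat) : C := (-1)^+j * 'C(j,i)%:R.
Definition Am : 'M[C]_n := \matrix_(i<n,j<n) aa i j.
Definition Nm : 'M[C]_n := \matrix_(i<n,j<n) (j == i.+1 :> nat)%:R.
Definition Ntm : 'M[C]_n := \matrix_(i<n,j<n) (i == j.+1 :> nat)%:R.
Definition Jm : 'M[C]_n := jordan1 C n.

Lemma aa_small i j : (j < i)%N -> aa i j = 0.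
Proof. by move=> h; rewrite /aa bin_small // mulr0. Qed.

Lemma JE (i j : 'I_n) : Jm i j = (i == j :> nat)%:R + (j == i.+1 :> nat)%:R.
Proof.
rewrite /Jm /jordan1 mxE orb_nat //; apply/negP => /andP[/eqP -> /eqP].
by move=> h; have := n_Sn j; rewrite -h.
Qed.

Lemma JAE : Jm *m Am = \matrix_(i<n,j<n) (aa i j + aa i.+1 j).
Proof.
apply/matrixP => i j; rewrite !mxE.
under eq_bigr => k _ do rewrite JE mulrDl mxE.
rewrite big_split /=.
under eq_bigr => k _ do rewrite eq_sym.
rewrite (@sumD _ _ (fun k => aa k j)) (@sumD _ _ (fun k => aa k j)) ltn_ord.
congr (_ + _); case: ifP => // h; rewrite aa_small //.
by apply: (leq_trans (ltn_ord j)); rewrite leqNgt h.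
Qed.

Lemma JAJ : Jm *m Am *m Jm = Am.
Proof.
rewrite JAE; apply/matrixP => i j; rewrite !mxE.
under eq_bigr => k _ do rewrite JE mulrDr mxE.
rewrite big_split /=.
under eq_bigr => k _ do rewrite mulrC.
under [X in _ + X]eq_bigr => k _ do rewrite mulrC.
rewrite (@sumD _ _ (fun k => aa i k + aa i.+1 k)) (@sumD' _ _ (fun k => aa i k + aa i.+1 k)) ltn_ord.
case: (nat_of_ord j) (ltn_ord j) => [|j'] hj.
  by rewrite addr0 [aa i.+1 0]aa_small // addr0.
rewrite (ltn_trans (ltnSn j') hj) /aa binS natrD exprS.
rewrite -!addrA. 
by ring.
Qed.

Lemma AA : Am *m Am = 1%:M.
Proof.
apply/matrixP => i j; rewrite !mxE.
under eq_bigr => k _ do rewrite !mxE /aa.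
have -> : \sum_(k < n) (-1) ^+ k * 'C(k, i)%:R * ((-1) ^+ j * 'C(j, k)%:R)
   = (-1)^+j * \sum_(k < n) (-1) ^+ k * ('C(j, k) * 'C(k,i))%:R :> C.
  rewrite mulr_sumr; apply: eq_bigr => k _; rewrite natrM; ring.
rewrite core // eq_sym.
have -> : (j == i :> nat) = (i == j) by rewrite eq_sym.
case: (eqVneq i j) => [->|ne]; last by rewrite ?mulr0 ?mul0r.
by rewrite mulr1 -expr2 -exprM mulnC exprM sqrrN expr1n expr1n.
Qed.

Definition bv : 'cV[C]_n := \col_(i<n) 'C(n,i)%:R.

Lemma Ab : Am *m bv = - (-1)^+n *: bv.
Proof.
apply/matrixP => i j; rewrite !mxE.
under eq_bigr => k _ do rewrite !mxE /aa.
have := core C n n.+1 i (ltnSn n); rewrite big_ord_recr /= binn mul1n (ltn_eqF (ltn_ord i)) mulr0.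
move/eqP; rewrite addr_eq0 => /eqP E.
have -> : \sum_(k < n) (-1) ^+ k * 'C(k, i)%:R * 'C(n, k)%:R =
  \sum_(k < n) (-1) ^+ k * ('C(n, k) * 'C(k,i))%:R :> C.
  by apply: eq_bigr => k _; rewrite natrM; ring.
by rewrite E; ring.
Qed.

Definition Lm : 'M[C]_n := \matrix_(i<n,j<n) (if (j.+1 < n)%N then 0 else aa i j + aa i.+1 j).

Lemma NAE : Nm *m Am = \matrix_(i<n,j<n) aa i.+1 j.
Proof.
apply/matrixP => i j; rewrite !mxE.
under eq_bigr => k _ do rewrite !mxE.
rewrite (@sumD _ _ (fun k => aa k j)).
case: ifP => // h; rewrite aa_small //.
by apply: (leq_trans (ltn_ord j)); rewrite leqNgt h.
Qed.

Lemma NANt : Nm *m Am *m Ntm + Jm *m Am = Lm.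
Proof.
rewrite NAE JAE; apply/matrixP => i j; rewrite !mxE.
under eq_bigr => k _ do rewrite !mxE mulrC.
rewrite (@sumD _ _ (fun k => aa i.+1 k)).
case: ifP => h; last by rewrite add0r.
rewrite /aa binS natrD exprS; ring.
Qed.

Lemma NNt : Nm *m Ntm = \matrix_(i<n,j<n) (if (i.+1 < n)%N then (i == j :> nat)%:R else 0).
Proof.
apply/matrixP => i j; rewrite !mxE.
under eq_bigr => k _ do rewrite !mxE.
by rewrite (@sumD _ _ (fun k => (k == j.+1 :> nat)%:R)) eqSS.
Qed.

Lemma Nb : Nm *m bv = \col_(i<n) (if (i.+1 < n)%N then 'C(n,i.+1)%:R else 0).
Proof.
apply/matrixP => i j; rewrite !mxE.
under eq_bigr => k _ do rewrite !mxE.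
by rewrite (@sumD _ _ (fun k => 'C(n,k)%:R)).
Qed.

Lemma conj_aa i j : (aa i j)^*%C = aa i j.
Proof. by rewrite /aa rmorphM rmorphXn rmorphN1 rmorph_nat. Qed.

Lemma conjA : map_mx conjc Am = Am.
Proof. by apply/matrixP => i j; rewrite !mxE conj_aa. Qed.
Lemma conjJ : map_mx conjc Jm = Jm.
Proof. by apply/matrixP => i j; rewrite !mxE conjc_nat. Qed.
Lemma conjNt : map_mx conjc Ntm = Ntm.
Proof. by apply/matrixP => i j; rewrite !mxE conjc_nat. Qed.
Lemma conjb : map_mx conjc bv = bv.
Proof. by apply/matrixP => i j; rewrite !mxE conjc_nat. Qed.

End Mat.

Lemma conjcM (R : rcfType) (x y : R[i]) : (x * y)^*%C = x^*%C * y^*%C.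
Proof. exact: rmorphM. Qed.
Lemma conjcN1X (R : rcfType) k : ((-1)^+k : R[i])^*%C = (-1)^+k.
Proof. by rewrite rmorphXn rmorphN1. Qed.

Lemma Lv (R : realType) m (v : 'cV[R[i]]_m.+1) :
  Lm R m.+1 *m v = \col_(i < m.+1) ((-1)^+m * 'C(m.+1, i.+1)%:R * v ord_max 0).
Proof.
apply/matrixP => i j; rewrite !mxE big_ord_recr /= big1 ?add0r.
  rewrite !mxE ltnn /aa (ord1 j) /= binS natrD; ring.
by move=> k _; rewrite !mxE /= ltnS ltn_ord mul0r.
Qed.

Lemma NNtv (R : realType) m (y : 'cV[R[i]]_m.+1) :
  Nm R m.+1 *m Ntm R m.+1 *m y = \col_(i < m.+1) (if (i.+1 < m.+1)%N then y i 0 else 0).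
Proof.
rewrite NNt; apply/matrixP => i j; rewrite !mxE (ord1 j).
case: ifP => h.
  rewrite (bigD1 i) //= big1 ?addr0; first by rewrite !mxE h eqxx mul1r.
  by move=> k /negPf hk; rewrite !mxE h eq_sym; move: hk; rewrite -val_eqE /= => ->; rewrite mul0r.
by rewrite big1 // => k _; rewrite !mxE h mul0r.
Qed.

Lemma JNE (R : realType) n : Jm R n = 1%:M + Nm R n.
Proof. by apply/matrixP => i j; rewrite JE !mxE. Qed.

Theorem lemma3p5 (R : realType) (n : nat) (v : 'cV[R[i]]_n) :
  strongly_c_reversible (jordan1 R[i] n, v).
Proof.
case: n v => [|m] v.
  exists (1%:M, 0); split; first split.
  - exact: unitmx1.
  - by rewrite /aff_mul /aff_one /=; congr pair; apply/matrixP => -[].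
  - by rewrite /aff_mul /aff_inv /=; congr pair; apply/matrixP => -[].
have s1 : (-1)^+m.+1 * (-1)^+m.+1 = 1 :> R[i].
  by rewrite -exprD addnn -mul2n exprM sqrrN expr1n expr1n.
pose c := v ord_max 0.
pose lam : R[i] := if c == 0 then (-1)^+m.+1 else (-1)^+m.+1 * c^*%C / c.
have hl1 : lam * lam^*%C = 1.
  rewrite /lam; case: eqP => hc.
    by rewrite conjcN1X -exprD addnn -mul2n exprM sqrrN expr1n expr1n.
  have hc' : c^*%C != 0 by rewrite conjc_eq0; apply/eqP.
  rewrite !conjcM conjcN1X conjc_inv conjcK.
  by rewrite -[RHS]s1; field; apply/andP; split => //; apply/eqP.
have hl2 : lam * c = (-1)^+m.+1 * c^*%C.
  rewrite /lam; case: eqP => hc; first by rewrite hc conjc0 !mulr0.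
  by field; apply/eqP.
pose A := Am R m.+1.
pose vc := map_mx conjc v.
pose s := Ntm R m.+1 *m v.
pose w := lam *: (A *m s) + c^*%C *: bv R m.+1 - Ntm R m.+1 *m vc.
have hAc : map_mx conjc (lam *: A) = lam^*%C *: A by rewrite map_mxZ conjA.
have hAA : (lam *: A) *m (lam^*%C *: A) = 1%:M.
  by rewrite -scalemxAl -scalemxAr scalerA hl1 scale1r AA.
exists (lam *: A, w); split; first split.
- by case: (mulmx1_unit hAA).
- have vcc : map_mx conjc vc = v by apply/matrixP => i j; rewrite !mxE conjcK.
  have hwc : map_mx conjc w = lam^*%C *: (A *m (Ntm R m.+1 *m vc)) + c *: bv R m.+1 - Ntm R m.+1 *m v.
    rewrite map_mxB map_mxD !map_mxZ !map_mxM conjA conjNt conjb vcc.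
    by congr (_ + _ *: _ - _); exact: conjcK.
  rewrite /aff_mul /aff_conj /aff_one /= hAc hwc hAA; congr pair.
  rewrite /w /s !mulmxDr !mulmxN -!scalemxAr -!scalemxAl !scalerA.
  rewrite /A (mulmxA (Am R m.+1) (Am R m.+1)) AA mul1mx Ab scalerA [c * lam]mulrC hl2 mulrC hl1 scale1r.
  have -> : (-1) ^+ m.+1 * c^*%C * - (-1) ^+ m.+1 = - c^*%C.
    by rewrite mulrN mulrAC s1 mul1r.
  by apply/matrixP => i j; rewrite !mxE; ring.
have hinvA : invmx (lam *: A) = lam^*%C *: A.
  have [u _] := mulmx1_unit hAA.
  by rewrite -[LHS]mulmx1 -hAA mulmxA mulVmx // mul1mx.
have cJ : map_mx conjc (jordan1 R[i] m.+1) = jordan1 R[i] m.+1 := conjJ R m.+1.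
have JAJ' : jordan1 R[i] m.+1 *m A *m jordan1 R[i] m.+1 = A := JAJ R m.+1.
pose X := lam *: A *m jordan1 R[i] m.+1 *m (lam^*%C *: A).
have hXJ : X *m jordan1 R[i] m.+1 = 1%:M.
  rewrite /X -!scalemxAl -mulmxA -scalemxAl -scalemxAr scalerA hl1 scale1r.
  by rewrite -!mulmxA (mulmxA _ A) JAJ' /A AA.
have hJX : jordan1 R[i] m.+1 *m X = 1%:M := mulmx1C hXJ.
have [uJ _] := mulmx1_unit hJX.
have hinvJ : invmx (jordan1 R[i] m.+1) = X.
  by rewrite -[LHS]mulmx1 -hJX mulmxA mulVmx // mul1mx.
rewrite /aff_mul /aff_inv /aff_conj /= hinvA cJ hinvJ; congr pair.
rewrite mulmxN mulmxA (_ : lam *: A *m jordan1 R[i] m.+1 *m (lam^*%C *: A) = X) //.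
apply: (can_inj (mulKmx uJ)).
have hNw : Nm R m.+1 *m w = lam *: (Nm R m.+1 *m A *m Ntm R m.+1 *m v)
   + c^*%C *: (Nm R m.+1 *m bv R m.+1) - Nm R m.+1 *m Ntm R m.+1 *m vc.
  rewrite /w /s mulmxDr mulmxDr mulmxN.
  rewrite -[Nm R m.+1 *m (lam *: _)]scalemxAr -[Nm R m.+1 *m (c^*%C *: _)]scalemxAr.
  by rewrite !mulmxA.
clearbody w X.
have JN : jordan1 R[i] m.+1 = 1%:M + Nm R m.+1 := JNE R m.+1.
rewrite !mulmxDr !mulmxN !mulmxA hJX !mul1mx.
rewrite [in jordan1 R[i] m.+1 *m w]JN mulmxDl mul1mx hNw.
rewrite -[jordan1 R[i] m.+1 *m (lam *: A)]scalemxAr -scalemxAl.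
have E3 : jordan1 R[i] m.+1 *m A *m v = Lm R m.+1 *m v - Nm R m.+1 *m A *m Ntm R m.+1 *m v.
  by rewrite -(NANt R m.+1) mulmxDl addrAC subrr add0r.
have key : lam * (-1)^+m * c = - c^*%C.
  by rewrite mulrAC hl2 exprS mulN1r !mulNr mulrAC -exprD addnn -mul2n exprM sqrrN !expr1n mul1r.
have LV : lam *: (Lm R m.+1 *m v) = - c^*%C *: \col_(i < m.+1) 'C(m.+1, i.+1)%:R.
  rewrite Lv; apply/matrixP => i j; rewrite !mxE -key /c; ring.
rewrite E3 scalerBr LV NNtv Nb.
apply/matrixP => i j; rewrite (ord1 j) !mxE.
case: ifP => h; first ring.
have hi : i = ord_max.
  by apply: val_inj => /=; apply/eqP; rewrite eqn_leq -ltnS ltn_ord leqNgt -ltnS h.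
rewrite hi /= binn /c; ring.
Qed.
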